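(* Let $n=p_1^{\alpha_1}p_2^{\alpha_2}p_3^{\alpha_3}$, where $\alpha_1,\alpha_2,\alpha_3$ are positive integers and $p_1<p_2<p_3$ are primes. If $p_3\geq 2p_2+1$, then $\delta(\mathcal{P}(C_n))=\deg(p_3^{\alpha_3})$.
   Context: For a finite group $G$, the power graph $\mathcal{P}(G)$ is the simple undirected graph with vertex set $G$ in which two distinct vertices are adjacent if one is an integral power of the other. $C_n$ denotes the cyclic group of order $n$, identified with $\mathbb{Z}_n=\{0,1,\ldots,n-1\}$, so a positive divisor $d<n$ of $n$ is regarded as the element $d\in\mathbb{Z}_n$. $\deg(a)$ is the degree of vertex $a$ in $\mathcal{P}(C_n)$ and $\delta$ denotes minimum degree. *)

(* Defs.v *)
From mathcomp Require Import all_boot all_order all_fingroup all_algebra.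
Set Implicit Arguments. Unset Strict Implicit. Unset Printing Implicit Defensive.

Definition pg_adj (gT : finGroupType) (x y : gT) : bool :=
  (x != y) && ((y \in <[x]>%g) || (x \in <[y]>%g)).

Definition pg_deg (gT : finGroupType) (x : gT) : nat :=
  #|[set y : gT | pg_adj x y]|.

(* minimum degree; #|gT| is an upper bound for every degree *)
Definition pg_mindeg (gT : finGroupType) : nat :=
  \big[minn/#|gT|]_(x : gT) pg_deg x.

(* Main.v *)
Require Import Defs.
From mathcomp Require Import all_boot all_order all_fingroup all_algebra.
From mathcomp Require Import ring zify cyclic.
Set Implicit Arguments. Unset Strict Implicit. Unset Printing Implicit Defensive.
Local Open Scope nat_scope.

Definition Vf (A1 A2 A3 B1 B2 B3 E1 E2 E3 : nat) := A1*A2*A3 + B1*B2*B3 - E1*E2*E3.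
Definition Tgt p1 p2 p3 r1 r2 r3 :=
  Vf (p1*r1) (p2*r2) 1 (p1*r1-r1) (p2*r2-r2) (p3*r3) ((p1-1)*r1) ((p2-1)*r2) 1.

Lemma TB p r : p*r - r = (p-1)*r.
Proof. by rewrite mulnBl mul1n. Qed.

Lemma MB p t z : 0 < p -> p*(t+z) - t = (p-1)*t + p*z.
Proof. move=> hp; rewrite mulnDr mulnBl mul1n addnBAC // leq_pmull //. Qed.

Lemma subleq x y e a b f q : x + y + e + q = a + b + f -> x + y - f <= a + b - e.
Proof. lia. Qed.
Lemma count_sumE (a : pred nat) m : count a (iota 0 m) = \sum_(i < m) a i.
Proof.
have -> : iota 0 m = index_iota 0 m by rewrite /index_iota subn0.
rewrite -sum1_count big_mkcond /= big_mkord; apply: eq_bigr => i _; by case: (a i).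
Qed.

Lemma count_crt m1 m2 (A B : pred nat) : coprime m1 m2 -> 0 < m1 -> 0 < m2 ->
  count (fun y => A (y %% m1) && B (y %% m2)) (iota 0 (m1 * m2)) =
  count A (iota 0 m1) * count B (iota 0 m2).
Proof.
move=> co m10 m20; rewrite !count_sumE big_distrl /=.
have n0 : 0 < m1 * m2 by rewrite muln_gt0 m10.
pose in_mod k (k0 : 0 < k) d := Ordinal (ltn_pmod d k0).
pose h (d : 'I_(m1 * m2)) := (in_mod _ m10 d, in_mod _ m20 d).
pose h' (d : 'I_m1 * 'I_m2) := in_mod _ n0 (chinese m1 m2 d.1 d.2).
rewrite (eq_bigr (fun a : 'I_m1 => \sum_(b < m2) (A a && B b : nat))); last first.
  by move=> a _; rewrite big_distrr /=; apply: eq_bigr => b _; case: (A a); case: (B b).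
rewrite pair_big /= (reindex_onto h h') => [|[d d'] _]; last first.
  have d1 : m1 %| m1 * m2 by apply: dvdn_mulr.
  have d2 : m2 %| m1 * m2 by apply: dvdn_mull.
  apply/eqP; rewrite /eq_op /= /eq_op /= !modn_dvdm //.
  by rewrite chinese_modl // chinese_modr // !modn_small ?eqxx ?ltn_ord.
symmetry; apply: eq_big => [[d ltd]|d _] //=.

apply/eqP; apply: val_inj => /=.
by rewrite -chinese_mod // modn_small.
Qed.
Lemma gcdnM a b y : coprime a b -> gcdn (a * b) y = gcdn a y * gcdn b y.
Proof.
move=> co; apply/eqP; rewrite eqn_dvd; apply/andP; split; last first.
  have cuv : coprime (gcdn a y) (gcdn b y).
    by apply: (coprime_dvdl (dvdn_gcdl a y)); apply: (coprime_dvdr (dvdn_gcdl b y)).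
  by rewrite dvdn_gcd dvdn_mul ?dvdn_gcdl // Gauss_dvd // !dvdn_gcdr.
set g := gcdn (a * b) y.
have H : g %| gcdn g a * gcdn g b.
  have Hg : forall h, gcdn h (a * b) %| gcdn h a * gcdn h b.
    move=> h; have d1 := dvdn_gcdl h (a * b); have d2 := dvdn_gcdr h (a * b).
    rewrite muln_gcdl !muln_gcdr !dvdn_gcd.
    by rewrite d2 (dvdn_mulr _ d1) (dvdn_mulr _ d1) (dvdn_mull _ d1).
  by have := Hg g; rewrite (gcdn_idPl (dvdn_gcdl _ _)).
apply: (dvdn_trans H); apply: dvdn_mul.
  by rewrite dvdn_gcd dvdn_gcdr (dvdn_trans (dvdn_gcdl _ _) (dvdn_gcdr _ _)).
by rewrite dvdn_gcd dvdn_gcdr (dvdn_trans (dvdn_gcdl _ _) (dvdn_gcdr _ _)).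
Qed.

Lemma gcd_dvd_pc p a c y : prime p -> c <= a ->
  (gcdn (p ^ a) y %| p ^ c) = (c == a) || ~~ (p ^ c.+1 %| y).
Proof.
move=> pp ca; have p1 := prime_gt1 pp.
have /(dvdn_pfactor _ _ pp) [j ja Ej] := dvdn_gcdl (p ^ a) y.
rewrite Ej dvdn_Pexp2l //.
case: eqP => [->|/eqP ne] //=.
have ca' : c < a by rewrite ltn_neqAle ne ca.
have -> : (p ^ c.+1 %| y) = (p ^ c.+1 %| gcdn (p ^ a) y) by rewrite dvdn_gcd dvdn_exp2l.
rewrite Ej dvdn_Pexp2l //; lia.
Qed.

Lemma count_dvd k m : 0 < k -> count (dvdn k) (iota 0 (k * m)) = m.
Proof.
move=> k0; elim: m => [|m IH]; first by rewrite muln0.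
rewrite mulnS addnC iotaD count_cat IH add0n.
case: k k0 IH => // k' _ IH /=.
rewrite dvdn_mulr ?dvdnn //.
have -> : count (dvdn k'.+1) (iota (k'.+1 * m).+1 k') = 0.
  apply/eqP; rewrite -leqn0 leqNgt -has_count; apply/hasP => [[y]].
  rewrite mem_iota => /andP[lo hi] dy.
  have d2 : k'.+1 %| y - k'.+1 * m by rewrite dvdn_sub // dvdn_mulr.
  have := dvdn_leq _ d2; lia.
lia.
Qed.

Lemma count_split (T : eqType) (a b : pred T) s :
  count a s = count (fun x => a x && b x) s + count (fun x => a x && ~~ b x) s.
Proof. elim: s => //= x s ->; case: (a x); case: (b x) => /=; lia. Qed.

Definition cA P G := count (fun y => G %| gcdn P y) (iota 0 P).
Definition cB P G := count (fun y => gcdn P y %| G) (iota 0 P).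
Definition cE P G := count (fun y => (G %| gcdn P y) && (gcdn P y %| G)) (iota 0 P).

Lemma comp_vals p a c : prime p -> c <= a ->
  [/\ cA (p ^ a) (p ^ c) = p ^ (a - c),
      cB (p ^ a) (p ^ c) = if c == a then p ^ a else p ^ a - p ^ (a - c.+1) &
      cE (p ^ a) (p ^ c) = if c == a then 1 else p ^ (a - c) - p ^ (a - c.+1)].
Proof.
move=> pp ca; have p0 := prime_gt0 pp.
have eA : forall y, (p ^ c %| gcdn (p ^ a) y) = (p ^ c %| y).
  by move=> y; rewrite dvdn_gcd dvdn_exp2l.
have cntA : forall c', c' <= a -> count (dvdn (p ^ c')) (iota 0 (p ^ a)) = p ^ (a - c').
  by move=> c' h; rewrite -{1}(subnKC h) expnD count_dvd // expn_gt0 p0.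
have eB y := @gcd_dvd_pc p a c y pp ca.
split.
- by rewrite /cA (eq_count eA) cntA.
- rewrite /cB (eq_count (fun y => eB y)).
  case: eqP => [_|/eqP ne] /=; first by rewrite count_predT size_iota.
  have ca' : c < a by rewrite ltn_neqAle ne ca.
  have := count_predC (dvdn (p ^ c.+1)) (iota 0 (p ^ a)).
  rewrite size_iota cntA // => E.
  rewrite (eq_count (a2 := predC (dvdn (p ^ c.+1)))) //; lia.
- rewrite /cE (eq_count (fun y => congr2 andb (eA y) (eB y))).
  case: eqP => [ec|/eqP ne] /=.
    rewrite (eq_count (a2 := dvdn (p ^ c))); last by move=> y; rewrite /= andbT.
    by rewrite cntA // ec subnn.
  have ca' : c < a by rewrite ltn_neqAle ne ca.
  have E := count_split (dvdn (p ^ c)) (dvdn (p ^ c.+1)) (iota 0 (p ^ a)).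
  rewrite cntA // in E.
  have E2 : count (fun x => (p ^ c %| x) && (p ^ c.+1 %| x)) (iota 0 (p ^ a)) = p ^ (a - c.+1).
    rewrite -cntA //; apply: eq_count => y /=.
    case h : (p ^ c.+1 %| y); rewrite ?andbF ?andbT //.
    by apply: dvdn_trans h; rewrite dvdn_exp2l.
  rewrite E2 in E.
  by rewrite E addKn.
Qed.
Lemma card_pred_ord (P : pred nat) N : #|[pred i : 'I_N | P i]| = count P (iota 0 N).
Proof.
rewrite count_sumE -sum1_card big_mkcond /=; apply: eq_bigr => i _.
by rewrite inE; case: (P i).
Qed.

Lemma count3 P1 P2 P3 (f1 f2 f3 : pred nat) :
  coprime P1 P2 -> coprime P1 P3 -> coprime P2 P3 -> 0 < P1 -> 0 < P2 -> 0 < P3 ->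
  count (fun y => [&& f1 (y %% P1), f2 (y %% P2) & f3 (y %% P3)]) (iota 0 (P1 * P2 * P3)) =
  count f1 (iota 0 P1) * count f2 (iota 0 P2) * count f3 (iota 0 P3).
Proof.
move=> c12 c13 c23 h1 h2 h3.
have d1 : P1 %| P1 * P2 by apply: dvdn_mulr.
have d2 : P2 %| P1 * P2 by apply: dvdn_mull.
rewrite -(count_crt (fun z => f1 z) (fun z => f2 z)) // -count_crt //; last first.
- by rewrite muln_gt0 h1.
- by rewrite coprimeMl c13.
apply: eq_count => y /=; rewrite !modn_dvdm //; by case: (f1 _).
Qed.

Lemma gcd3 P1 P2 P3 y : coprime P1 P2 -> coprime P1 P3 -> coprime P2 P3 ->
  gcdn (P1 * P2 * P3) y = gcdn P1 y * gcdn P2 y * gcdn P3 y.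
Proof.
by move=> c12 c13 c23; rewrite gcdnM ?coprimeMl ?c13 // gcdnM.
Qed.

Lemma dvd3 P1 P2 P3 x y : coprime P1 P2 -> coprime P1 P3 -> coprime P2 P3 ->
  (gcdn (P1 * P2 * P3) x %| gcdn (P1 * P2 * P3) y) =
  [&& gcdn P1 x %| gcdn P1 y, gcdn P2 x %| gcdn P2 y & gcdn P3 x %| gcdn P3 y].
Proof.
move=> c12 c13 c23; apply/idP/idP.
  move=> H.
  have key : forall P, P %| P1 * P2 * P3 -> gcdn P x %| gcdn P y.
    move=> P dP; rewrite dvdn_gcd dvdn_gcdl /=.
    apply: (dvdn_trans _ (dvdn_gcdr (P1 * P2 * P3) y)); apply: (dvdn_trans _ H).
    by rewrite dvdn_gcd dvdn_gcdr (dvdn_trans (dvdn_gcdl _ _) dP).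
  have e1 : P1 %| P1 * P2 * P3 by rewrite -mulnA dvdn_mulr.
  have e2 : P2 %| P1 * P2 * P3 by rewrite dvdn_mulr // dvdn_mull.
  have e3 : P3 %| P1 * P2 * P3 by rewrite dvdn_mull.
  by rewrite !key.
case/and3P => h1 h2 h3; rewrite !gcd3 //.
by rewrite !dvdn_mul.
Qed.

Lemma div_dvd N a b : 0 < N -> a %| N -> b %| N -> (N %/ b %| N %/ a) = (a %| b).
Proof.
move=> N0 da db.
have b0 : 0 < b by case: b db => //; rewrite dvd0n => /eqP E; move: N0; rewrite E.
have q0 : 0 < N %/ b by rewrite divn_gt0 // dvdn_leq.
rewrite dvdn_divRL // -{2}(divnK db) dvdn_pmul2l //.
Qed.

Lemma mem_cycleZ N' (x y : 'I_N'.+2) : (y \in <[x]>%g) = (gcdn N'.+2 x %| gcdn N'.+2 y).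
Proof.
have ox : forall z : 'I_N'.+2, #[z]%g = N'.+2 %/ gcdn N'.+2 z.
  by move=> z; rewrite -{1}(Zp1_expgz z) orderXgcd order_Zp1.
rewrite -cycle_subG -(cardSg_cyclic (G := [set: 'I_N'.+2])) ?subsetT //; last first.
  by apply/cyclicP; exists Zp1; exact: Zp_cycle.
change ((order y %| order x) = (gcdn N'.+2 x %| gcdn N'.+2 y)); rewrite !ox div_dvd ?dvdn_gcdl //.
Qed.


Lemma deg_formula N' P1 P2 P3 (x : 'I_N'.+2) :
  N'.+2 = P1 * P2 * P3 ->
  coprime P1 P2 -> coprime P1 P3 -> coprime P2 P3 -> 0 < P1 -> 0 < P2 -> 0 < P3 ->
  pg_deg x = cA P1 (gcdn P1 x) * cA P2 (gcdn P2 x) * cA P3 (gcdn P3 x)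
           + cB P1 (gcdn P1 x) * cB P2 (gcdn P2 x) * cB P3 (gcdn P3 x)
           - cE P1 (gcdn P1 x) * cE P2 (gcdn P2 x) * cE P3 (gcdn P3 x) - 1.
Proof.
move=> EN c12 c13 c23 h1 h2 h3.
pose C := fun y : nat => (gcdn N'.+2 x %| gcdn N'.+2 y) || (gcdn N'.+2 y %| gcdn N'.+2 x).
have e1 : #|[set y | pg_adj x y]| = #|[predD1 [pred y : 'I_N'.+2 | C y] & x]|.
  apply: eq_card => y; rewrite !inE /pg_adj !mem_cycleZ eq_sym.
  by [].
rewrite /pg_deg e1.
have e2 := cardD1 x [pred y : 'I_N'.+2 | C y].
have Cx : C x by rewrite /C dvdnn.
rewrite inE Cx /= in e2.
have e3 : #|[pred y : 'I_N'.+2 | C y]| = count C (iota 0 N'.+2) by apply: card_pred_ord.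
have e4 := count_predUI (fun y => gcdn N'.+2 x %| gcdn N'.+2 y)
                        (fun y => gcdn N'.+2 y %| gcdn N'.+2 x) (iota 0 N'.+2).
have eA : count (fun y => gcdn N'.+2 x %| gcdn N'.+2 y) (iota 0 N'.+2) =
          cA P1 (gcdn P1 x) * cA P2 (gcdn P2 x) * cA P3 (gcdn P3 x).
  rewrite /cA -count3 //; move: (nat_of_ord x) => X; rewrite EN; apply: eq_count => y /=; by rewrite !gcdn_modr dvd3.
have eB : count (fun y => gcdn N'.+2 y %| gcdn N'.+2 x) (iota 0 N'.+2) =
          cB P1 (gcdn P1 x) * cB P2 (gcdn P2 x) * cB P3 (gcdn P3 x).
  rewrite /cB -count3 //; move: (nat_of_ord x) => X; rewrite EN; apply: eq_count => y /=; by rewrite !gcdn_modr dvd3.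
have eE : count (predI (fun y => gcdn N'.+2 x %| gcdn N'.+2 y)
                       (fun y => gcdn N'.+2 y %| gcdn N'.+2 x)) (iota 0 N'.+2) =
          cE P1 (gcdn P1 x) * cE P2 (gcdn P2 x) * cE P3 (gcdn P3 x).
  rewrite /cE -count3 //; move: (nat_of_ord x) => X; rewrite EN; apply: eq_count => y /=; rewrite !gcdn_modr !dvd3 //.
  by case: (gcdn P1 X %| _); case: (gcdn P2 X %| _); case: (gcdn P3 X %| _);
     case: (gcdn P1 y %| _); case: (gcdn P2 y %| _); case: (gcdn P3 y %| _).
have e6 : count C (iota 0 N'.+2) + cE P1 (gcdn P1 x) * cE P2 (gcdn P2 x) * cE P3 (gcdn P3 x) =
   cA P1 (gcdn P1 x) * cA P2 (gcdn P2 x) * cA P3 (gcdn P3 x) +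
   cB P1 (gcdn P1 x) * cB P2 (gcdn P2 x) * cB P3 (gcdn P3 x).
  by rewrite -eA -eB -eE -e4.
clear e4 eA eB eE; rewrite e3 in e2; rewrite -e6 e2; by rewrite addnK add1n subn1.
Qed.
Lemma core_OOO (p1 p2 p3 r1 r2 r3  : nat) :
  2 <= p1 -> p1 < p2 -> 2 * p2 + 1 <= p3 -> 0 < r1 -> 0 < r2 -> 0 < r3 -> 
  Tgt p1 p2 p3 r1 r2 r3 <= Vf 1 1 1 (p1 * r1) (p2 * r2) (p3 * r3) 1 1 1.
Proof.
move=> Hp1 Hp2 Hp3 Hr1 Hr2 Hr3 ; rewrite /Tgt /Vf !TB.
have [w1 ?] : exists w, r1 = w.+1 by (exists r1.-1; lia). subst r1.
have [w2 ?] : exists w, r2 = w.+1 by (exists r2.-1; lia). subst r2.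
have [w3 ?] : exists w, r3 = w.+1 by (exists r3.-1; lia). subst r3.
have [u1 ?] : exists u, p1 = u.+2 by (exists (p1 - 2); lia). subst p1.
have [u2 ?] : exists u, p2 = (u1+u).+3 by (exists (p2 - u1.+3); lia). subst p2.
have [u3 ?] : exists u, p3 = (2 * u1 + 2 * u2+u).+4.+3 by (exists (p3 - (2 * u1 + 2 * u2).+4.+3); lia). subst p3.
apply: (subleq (q := 24 + 28 * w3 + 24 * w2 + 28 * w2 * w3 + 24 * w1 + 28 * w1 * w3 + 24 * w1 * w2 + 28 * w1 * w2 * w3 + 4 * u3 + 4 * u3 * w3 + 4 * u3 * w2 + 4 * u3 * w2 * w3 + 4 * u3 * w1 + 4 * u3 * w1 * w3 + 4 * u3 * w1 * w2 + 4 * u3 * w1 * w2 * w3 + 14 * u2 + 15 * u2 * w3 + 14 * u2 * w2 + 15 * u2 * w2 * w3 + 14 * u2 * w1 + 15 * u2 * w1 * w3 + 14 * u2 * w1 * w2 + 15 * u2 * w1 * w2 * w3 + u2 * u3 + u2 * u3 * w3 + u2 * u3 * w2 + u2 * u3 * w2 * w3 + u2 * u3 * w1 + u2 * u3 * w1 * w3 + u2 * u3 * w1 * w2 + u2 * u3 * w1 * w2 * w3 + 2 * u2 * u2 + 2 * u2 * u2 * w3 + 2 * u2 * u2 * w2 + 2 * u2 * u2 * w2 * w3 + 2 * u2 * u2 * w1 + 2 * u2 * u2 * w1 * w3 + 2 * u2 * u2 * w1 * w2 + 2 * u2 * u2 * w1 * w2 * w3 + 20 * u1 + 22 * u1 *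 w3 + 20 * u1 * w2 + 22 * u1 * w2 * w3 + 20 * u1 * w1 + 22 * u1 * w1 * w3 + 20 * u1 * w1 * w2 + 22 * u1 * w1 * w2 * w3 + 2 * u1 * u3 + 2 * u1 * u3 * w3 + 2 * u1 * u3 * w2 + 2 * u1 * u3 * w2 * w3 + 2 * u1 * u3 * w1 + 2 * u1 * u3 * w1 * w3 + 2 * u1 * u3 * w1 * w2 + 2 * u1 * u3 * w1 * w2 * w3 + 6 * u1 * u2 + 6 * u1 * u2 * w3 + 6 * u1 * u2 * w2 + 6 * u1 * u2 * w2 * w3 + 6 * u1 * u2 * w1 + 6 * u1 * u2 * w1 * w3 + 6 * u1 * u2 * w1 * w2 + 6 * u1 * u2 * w1 * w2 * w3 + 4 * u1 * u1 + 4 * u1 * u1 * w3 + 4 * u1 * u1 * w2 + 4 * u1 * u1 * w2 * w3 + 4 * u1 * u1 * w1 + 4 * u1 * u1 * w1 * w3 + 4 * u1 * u1 * w1 * w2 + 4 * u1 * u1 * w1 * w2 * w3)).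
rewrite !subn1 /=. ring.
Qed.

Lemma core_OOM (p1 p2 p3 r1 r2 r3 t3 : nat) :
  2 <= p1 -> p1 < p2 -> 2 * p2 + 1 <= p3 -> 0 < r1 -> 0 < r2 -> 0 < r3 -> 0 < t3 -> t3 <= r3 ->
  Tgt p1 p2 p3 r1 r2 r3 <= Vf 1 1 (p3 * t3) (p1 * r1) (p2 * r2) (p3 * r3-t3) 1 1 ((p3-1)*t3).
Proof.
move=> Hp1 Hp2 Hp3 Hr1 Hr2 Hr3 Ht3 Htr3; rewrite /Tgt /Vf !TB.
have [w1 ?] : exists w, r1 = w.+1 by (exists r1.-1; lia). subst r1.
have [w2 ?] : exists w, r2 = w.+1 by (exists r2.-1; lia). subst r2.
have [w3 ?] : exists w, t3 = w.+1 by (exists t3.-1; lia). subst t3.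
have [z3 ?] : exists z, r3 = w3.+1 + z by (exists (r3 - w3.+1); lia). subst r3.
rewrite MB; last lia.
have [u1 ?] : exists u, p1 = u.+2 by (exists (p1 - 2); lia). subst p1.
have [u2 ?] : exists u, p2 = (u1+u).+3 by (exists (p2 - u1.+3); lia). subst p2.
have [u3 ?] : exists u, p3 = (2 * u1 + 2 * u2+u).+4.+3 by (exists (p3 - (2 * u1 + 2 * u2).+4.+3); lia). subst p3.
apply: (subleq (q := 19 + 28 * z3 + 23 * w3 + 18 * w2 + 28 * w2 * z3 + 22 * w2 * w3 + 18 * w1 + 28 * w1 * z3 + 22 * w1 * w3 + 18 * w1 * w2 + 28 * w1 * w2 * z3 + 22 * w1 * w2 * w3 + 4 * u3 + 4 * u3 * z3 + 4 * u3 * w3 + 4 * u3 * w2 + 4 * u3 * w2 * z3 + 4 * u3 * w2 * w3 + 4 * u3 * w1 + 4 * u3 * w1 * z3 + 4 * u3 * w1 * w3 + 4 * u3 * w1 * w2 + 4 * u3 * w1 * w2 * z3 + 4 * u3 * w1 * w2 * w3 + 12 * u2 + 15 * u2 * z3 + 13 * u2 * w3 + 12 * u2 * w2 + 15 * u2 * w2 * z3 + 13 * u2 * w2 * w3 + 12 * u2 * w1 + 15 * u2 * w1 * z3 + 13 * u2 * w1 * w3 + 12 * u2 * w1 * w2 + 15 * u2 * w1 * w2 * z3 + 13 * u2 * w1 * w2 * w3 + u2 * u3 + u2 * u3 * z3 + u2 * u3 * w3 + u2 * u3 * w2 + u2 * u3 * w2 * z3 + u2 * u3 * w2 * w3 +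 u2 * u3 * w1 + u2 * u3 * w1 * z3 + u2 * u3 * w1 * w3 + u2 * u3 * w1 * w2 + u2 * u3 * w1 * w2 * z3 + u2 * u3 * w1 * w2 * w3 + 2 * u2 * u2 + 2 * u2 * u2 * z3 + 2 * u2 * u2 * w3 + 2 * u2 * u2 * w2 + 2 * u2 * u2 * w2 * z3 + 2 * u2 * u2 * w2 * w3 + 2 * u2 * u2 * w1 + 2 * u2 * u2 * w1 * z3 + 2 * u2 * u2 * w1 * w3 + 2 * u2 * u2 * w1 * w2 + 2 * u2 * u2 * w1 * w2 * z3 + 2 * u2 * u2 * w1 * w2 * w3 + 15 * u1 + 22 * u1 * z3 + 17 * u1 * w3 + 15 * u1 * w2 + 22 * u1 * w2 * z3 + 17 * u1 * w2 * w3 + 15 * u1 * w1 + 22 * u1 * w1 * z3 + 17 * u1 * w1 * w3 + 15 * u1 * w1 * w2 + 22 * u1 * w1 * w2 * z3 + 17 * u1 * w1 * w2 * w3 + 2 * u1 * u3 + 2 * u1 * u3 * z3 + 2 * u1 * u3 * w3 + 2 * u1 * u3 * w2 + 2 * u1 * u3 * w2 * z3 + 2 * u1 * u3 * w2 * w3 + 2 * u1 * u3 * w1 + 2 * u1 * u3 * w1 * z3 + 2 * u1 * u3 * w1 * w3 + 2 * u1 * u3 * w1 * w2 + 2 * u1 * u3 * w1 * w2 * z3 + 2 * u1 * u3 * w1 * w2 * w3 + 5 * u1 * u2 + 6 * u1 * u2 * z3 + 5 * u1 * u2 * w3 + 5 * u1 * u2 * w2 + 6 * u1 * u2 * w2 *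 z3 + 5 * u1 * u2 * w2 * w3 + 5 * u1 * u2 * w1 + 6 * u1 * u2 * w1 * z3 + 5 * u1 * u2 * w1 * w3 + 5 * u1 * u2 * w1 * w2 + 6 * u1 * u2 * w1 * w2 * z3 + 5 * u1 * u2 * w1 * w2 * w3 + 3 * u1 * u1 + 4 * u1 * u1 * z3 + 3 * u1 * u1 * w3 + 3 * u1 * u1 * w2 + 4 * u1 * u1 * w2 * z3 + 3 * u1 * u1 * w2 * w3 + 3 * u1 * u1 * w1 + 4 * u1 * u1 * w1 * z3 + 3 * u1 * u1 * w1 * w3 + 3 * u1 * u1 * w1 * w2 + 4 * u1 * u1 * w1 * w2 * z3 + 3 * u1 * u1 * w1 * w2 * w3)).
rewrite !subn1 /=. ring.
Qed.

Lemma core_OMO (p1 p2 p3 r1 r2 r3 t2 : nat) :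
  2 <= p1 -> p1 < p2 -> 2 * p2 + 1 <= p3 -> 0 < r1 -> 0 < r2 -> 0 < r3 -> 0 < t2 -> t2 <= r2 ->
  Tgt p1 p2 p3 r1 r2 r3 <= Vf 1 (p2 * t2) 1 (p1 * r1) (p2 * r2-t2) (p3 * r3) 1 ((p2-1)*t2) 1.
Proof.
move=> Hp1 Hp2 Hp3 Hr1 Hr2 Hr3 Ht2 Htr2; rewrite /Tgt /Vf !TB.
have [w1 ?] : exists w, r1 = w.+1 by (exists r1.-1; lia). subst r1.
have [w2 ?] : exists w, t2 = w.+1 by (exists t2.-1; lia). subst t2.
have [z2 ?] : exists z, r2 = w2.+1 + z by (exists (r2 - w2.+1); lia). subst r2.
rewrite MB; last lia.
have [w3 ?] : exists w, r3 = w.+1 by (exists r3.-1; lia). subst r3.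
have [u1 ?] : exists u, p1 = u.+2 by (exists (p1 - 2); lia). subst p1.
have [u2 ?] : exists u, p2 = (u1+u).+3 by (exists (p2 - u1.+3); lia). subst p2.
have [u3 ?] : exists u, p3 = (2 * u1 + 2 * u2+u).+4.+3 by (exists (p3 - (2 * u1 + 2 * u2).+4.+3); lia). subst p3.
apply: (subleq (q := 11 + 24 * z2 + 14 * w3 + 28 * w3 * z2 + 11 * w2 + 14 * w2 * w3 + 10 * w1 + 24 * w1 * z2 + 14 * w1 * w3 + 28 * w1 * w3 * z2 + 10 * w1 * w2 + 14 * w1 * w2 * w3 + 2 * u3 + 4 * u3 * z2 + 2 * u3 * w3 + 4 * u3 * w3 * z2 + 2 * u3 * w2 + 2 * u3 * w2 * w3 + 2 * u3 * w1 + 4 * u3 * w1 * z2 + 2 * u3 * w1 * w3 + 4 * u3 * w1 * w3 * z2 + 2 * u3 * w1 * w2 + 2 * u3 * w1 * w2 * w3 + 10 * u2 + 14 * u2 * z2 + 11 * u2 * w3 + 15 * u2 * w3 * z2 + 10 * u2 * w2 + 11 * u2 * w2 * w3 + 10 * u2 * w1 + 14 * u2 * w1 * z2 + 11 * u2 * w1 * w3 + 15 * u2 * w1 * w3 * z2 + 10 * u2 * w1 * w2 + 11 * u2 * w1 * w2 * w3 + u2 * u3 + u2 * u3 * z2 + u2 * u3 * w3 + u2 * u3 * w3 * z2 + u2 * u3 * w2 + u2 * u3 * w2 * w3 + u2 * u3 * w1 + u2 * u3 * w1 * z2 + u2 * u3 * w1 * w3 + u2 * u3 * w1 * w3 * z2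 + u2 * u3 * w1 * w2 + u2 * u3 * w1 * w2 * w3 + 2 * u2 * u2 + 2 * u2 * u2 * z2 + 2 * u2 * u2 * w3 + 2 * u2 * u2 * w3 * z2 + 2 * u2 * u2 * w2 + 2 * u2 * u2 * w2 * w3 + 2 * u2 * u2 * w1 + 2 * u2 * u2 * w1 * z2 + 2 * u2 * u2 * w1 * w3 + 2 * u2 * u2 * w1 * w3 * z2 + 2 * u2 * u2 * w1 * w2 + 2 * u2 * u2 * w1 * w2 * w3 + 9 * u1 + 20 * u1 * z2 + 11 * u1 * w3 + 22 * u1 * w3 * z2 + 9 * u1 * w2 + 11 * u1 * w2 * w3 + 9 * u1 * w1 + 20 * u1 * w1 * z2 + 11 * u1 * w1 * w3 + 22 * u1 * w1 * w3 * z2 + 9 * u1 * w1 * w2 + 11 * u1 * w1 * w2 * w3 + u1 * u3 + 2 * u1 * u3 * z2 + u1 * u3 * w3 + 2 * u1 * u3 * w3 * z2 + u1 * u3 * w2 + u1 * u3 * w2 * w3 + u1 * u3 * w1 + 2 * u1 * u3 * w1 * z2 + u1 * u3 * w1 * w3 + 2 * u1 * u3 * w1 * w3 * z2 + u1 * u3 * w1 * w2 + u1 * u3 * w1 * w2 * w3 + 4 * u1 * u2 + 6 * u1 * u2 * z2 + 4 * u1 * u2 * w3 + 6 * u1 * u2 * w3 * z2 + 4 * u1 * u2 * w2 + 4 * u1 * u2 * w2 * w3 + 4 * u1 * u2 * w1 + 6 * u1 * u2 * w1 * z2 + 4 * u1 * u2 * w1 * w3 + 6 * u1 * u2 * w1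 * w3 * z2 + 4 * u1 * u2 * w1 * w2 + 4 * u1 * u2 * w1 * w2 * w3 + 2 * u1 * u1 + 4 * u1 * u1 * z2 + 2 * u1 * u1 * w3 + 4 * u1 * u1 * w3 * z2 + 2 * u1 * u1 * w2 + 2 * u1 * u1 * w2 * w3 + 2 * u1 * u1 * w1 + 4 * u1 * u1 * w1 * z2 + 2 * u1 * u1 * w1 * w3 + 4 * u1 * u1 * w1 * w3 * z2 + 2 * u1 * u1 * w1 * w2 + 2 * u1 * u1 * w1 * w2 * w3)).
rewrite !subn1 /=. ring.
Qed.

Lemma core_OMM (p1 p2 p3 r1 r2 r3 t2 t3 : nat) :
  2 <= p1 -> p1 < p2 -> 2 * p2 + 1 <= p3 -> 0 < r1 -> 0 < r2 -> 0 < r3 -> 0 < t2 -> t2 <= r2 -> 0 < t3 -> t3 <= r3 ->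
  Tgt p1 p2 p3 r1 r2 r3 <= Vf 1 (p2 * t2) (p3 * t3) (p1 * r1) (p2 * r2-t2) (p3 * r3-t3) 1 ((p2-1)*t2) ((p3-1)*t3).
Proof.
move=> Hp1 Hp2 Hp3 Hr1 Hr2 Hr3 Ht2 Htr2 Ht3 Htr3; rewrite /Tgt /Vf !TB.
have [w1 ?] : exists w, r1 = w.+1 by (exists r1.-1; lia). subst r1.
have [w2 ?] : exists w, t2 = w.+1 by (exists t2.-1; lia). subst t2.
have [z2 ?] : exists z, r2 = w2.+1 + z by (exists (r2 - w2.+1); lia). subst r2.
rewrite MB; last lia.
have [w3 ?] : exists w, t3 = w.+1 by (exists t3.-1; lia). subst t3.
have [z3 ?] : exists z, r3 = w3.+1 + z by (exists (r3 - w3.+1); lia). subst r3.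
rewrite MB; last lia.
have [u1 ?] : exists u, p1 = u.+2 by (exists (p1 - 2); lia). subst p1.
have [u2 ?] : exists u, p2 = (u1+u).+3 by (exists (p2 - u1.+3); lia). subst p2.
have [u3 ?] : exists u, p3 = (2 * u1 + 2 * u2+u).+4.+3 by (exists (p3 - (2 * u1 + 2 * u2).+4.+3); lia). subst p3.
apply: (subleq (q := 15 + 14 * z3 + 18 * z2 + 28 * z2 * z3 + 19 * w3 + 22 * w3 * z2 + 15 * w2 + 14 * w2 * z3 + 19 * w2 * w3 + 6 * w1 + 14 * w1 * z3 + 18 * w1 * z2 + 28 * w1 * z2 * z3 + 10 * w1 * w3 + 22 * w1 * w3 * z2 + 6 * w1 * w2 + 14 * w1 * w2 * z3 + 10 * w1 * w2 * w3 + 3 * u3 + 2 * u3 * z3 + 4 * u3 * z2 + 4 * u3 * z2 * z3 + 3 * u3 * w3 + 4 * u3 * w3 * z2 + 3 * u3 * w2 + 2 * u3 * w2 * z3 + 3 * u3 * w2 * w3 + 2 * u3 * w1 + 2 * u3 * w1 * z3 + 4 * u3 * w1 * z2 + 4 * u3 * w1 * z2 * z3 + 2 * u3 * w1 * w3 + 4 * u3 * w1 * w3 * z2 + 2 * u3 * w1 * w2 + 2 * u3 * w1 * w2 * z3 + 2 * u3 * w1 * w2 * w3 + 11 * u2 + 11 * u2 * z3 + 12 * u2 * z2 + 15 * u2 * z2 * z3 + 12 * u2 * w3 + 13 * u2 * w3 * z2 + 11 * u2 * w2 + 11 * u2 * w2 * z3 + 12 * u2 * w2 * w3 + 8 * u2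 * w1 + 11 * u2 * w1 * z3 + 12 * u2 * w1 * z2 + 15 * u2 * w1 * z2 * z3 + 9 * u2 * w1 * w3 + 13 * u2 * w1 * w3 * z2 + 8 * u2 * w1 * w2 + 11 * u2 * w1 * w2 * z3 + 9 * u2 * w1 * w2 * w3 + u2 * u3 + u2 * u3 * z3 + u2 * u3 * z2 + u2 * u3 * z2 * z3 + u2 * u3 * w3 + u2 * u3 * w3 * z2 + u2 * u3 * w2 + u2 * u3 * w2 * z3 + u2 * u3 * w2 * w3 + u2 * u3 * w1 + u2 * u3 * w1 * z3 + u2 * u3 * w1 * z2 + u2 * u3 * w1 * z2 * z3 + u2 * u3 * w1 * w3 + u2 * u3 * w1 * w3 * z2 + u2 * u3 * w1 * w2 + u2 * u3 * w1 * w2 * z3 + u2 * u3 * w1 * w2 * w3 + 2 * u2 * u2 + 2 * u2 * u2 * z3 + 2 * u2 * u2 * z2 + 2 * u2 * u2 * z2 * z3 + 2 * u2 * u2 * w3 + 2 * u2 * u2 * w3 * z2 + 2 * u2 * u2 * w2 + 2 * u2 * u2 * w2 * z3 + 2 * u2 * u2 * w2 * w3 + 2 * u2 * u2 * w1 + 2 * u2 * u2 * w1 * z3 + 2 * u2 * u2 * w1 * z2 + 2 * u2 * u2 * w1 * z2 * z3 + 2 * u2 * u2 * w1 * w3 + 2 * u2 * u2 * w1 * w3 * z2 + 2 * u2 * u2 * w1 * w2 + 2 * u2 * u2 * w1 * w2 * z3 + 2 * u2 * u2 * w1 * w2 * w3 + 8 * u1 + 11 * u1 * z3 + 15 * u1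 * z2 + 22 * u1 * z2 * z3 + 10 * u1 * w3 + 17 * u1 * w3 * z2 + 8 * u1 * w2 + 11 * u1 * w2 * z3 + 10 * u1 * w2 * w3 + 5 * u1 * w1 + 11 * u1 * w1 * z3 + 15 * u1 * w1 * z2 + 22 * u1 * w1 * z2 * z3 + 7 * u1 * w1 * w3 + 17 * u1 * w1 * w3 * z2 + 5 * u1 * w1 * w2 + 11 * u1 * w1 * w2 * z3 + 7 * u1 * w1 * w2 * w3 + u1 * u3 + u1 * u3 * z3 + 2 * u1 * u3 * z2 + 2 * u1 * u3 * z2 * z3 + u1 * u3 * w3 + 2 * u1 * u3 * w3 * z2 + u1 * u3 * w2 + u1 * u3 * w2 * z3 + u1 * u3 * w2 * w3 + u1 * u3 * w1 + u1 * u3 * w1 * z3 + 2 * u1 * u3 * w1 * z2 + 2 * u1 * u3 * w1 * z2 * z3 + u1 * u3 * w1 * w3 + 2 * u1 * u3 * w1 * w3 * z2 + u1 * u3 * w1 * w2 + u1 * u3 * w1 * w2 * z3 + u1 * u3 * w1 * w2 * w3 + 3 * u1 * u2 + 4 * u1 * u2 * z3 + 5 * u1 * u2 * z2 + 6 * u1 * u2 * z2 * z3 + 3 * u1 * u2 * w3 + 5 * u1 * u2 * w3 * z2 + 3 * u1 * u2 * w2 + 4 * u1 * u2 * w2 * z3 + 3 * u1 * u2 * w2 * w3 + 3 * u1 * u2 * w1 + 4 * u1 * u2 * w1 * z3 + 5 * u1 * u2 * w1 * z2 + 6 * u1 * u2 * w1 * z2 * z3 + 3 * u1 * u2 * w1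 * w3 + 5 * u1 * u2 * w1 * w3 * z2 + 3 * u1 * u2 * w1 * w2 + 4 * u1 * u2 * w1 * w2 * z3 + 3 * u1 * u2 * w1 * w2 * w3 + u1 * u1 + 2 * u1 * u1 * z3 + 3 * u1 * u1 * z2 + 4 * u1 * u1 * z2 * z3 + u1 * u1 * w3 + 3 * u1 * u1 * w3 * z2 + u1 * u1 * w2 + 2 * u1 * u1 * w2 * z3 + u1 * u1 * w2 * w3 + u1 * u1 * w1 + 2 * u1 * u1 * w1 * z3 + 3 * u1 * u1 * w1 * z2 + 4 * u1 * u1 * w1 * z2 * z3 + u1 * u1 * w1 * w3 + 3 * u1 * u1 * w1 * w3 * z2 + u1 * u1 * w1 * w2 + 2 * u1 * u1 * w1 * w2 * z3 + u1 * u1 * w1 * w2 * w3)).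
rewrite !subn1 /=. ring.
Qed.

Lemma core_MOO (p1 p2 p3 r1 r2 r3 t1 : nat) :
  2 <= p1 -> p1 < p2 -> 2 * p2 + 1 <= p3 -> 0 < r1 -> 0 < r2 -> 0 < r3 -> 0 < t1 -> t1 <= r1 ->
  Tgt p1 p2 p3 r1 r2 r3 <= Vf (p1 * t1) 1 1 (p1 * r1-t1) (p2 * r2) (p3 * r3) ((p1-1)*t1) 1 1.
Proof.
move=> Hp1 Hp2 Hp3 Hr1 Hr2 Hr3 Ht1 Htr1; rewrite /Tgt /Vf !TB.
have [w1 ?] : exists w, t1 = w.+1 by (exists t1.-1; lia). subst t1.
have [z1 ?] : exists z, r1 = w1.+1 + z by (exists (r1 - w1.+1); lia). subst r1.
rewrite MB; last lia.
have [w2 ?] : exists w, r2 = w.+1 by (exists r2.-1; lia). subst r2.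
have [w3 ?] : exists w, r3 = w.+1 by (exists r3.-1; lia). subst r3.
have [u1 ?] : exists u, p1 = u.+2 by (exists (p1 - 2); lia). subst p1.
have [u2 ?] : exists u, p2 = (u1+u).+3 by (exists (p2 - u1.+3); lia). subst p2.
have [u3 ?] : exists u, p3 = (2 * u1 + 2 * u2+u).+4.+3 by (exists (p3 - (2 * u1 + 2 * u2).+4.+3); lia). subst p3.
apply: (subleq (q := 4 + 24 * z1 + 7 * w3 + 28 * w3 * z1 + 3 * w2 + 24 * w2 * z1 + 7 * w2 * w3 + 28 * w2 * w3 * z1 + 4 * w1 + 7 * w1 * w3 + 3 * w1 * w2 + 7 * w1 * w2 * w3 + u3 + 4 * u3 * z1 + u3 * w3 + 4 * u3 * w3 * z1 + u3 * w2 + 4 * u3 * w2 * z1 + u3 * w2 * w3 + 4 * u3 * w2 * w3 * z1 + u3 * w1 + u3 * w1 * w3 + u3 * w1 * w2 + u3 * w1 * w2 * w3 + u2 + 14 * u2 * z1 + 2 * u2 * w3 + 15 * u2 * w3 * z1 + u2 * w2 + 14 * u2 * w2 * z1 + 2 * u2 * w2 * w3 + 15 * u2 * w2 * w3 * z1 + u2 * w1 + 2 * u2 * w1 * w3 + u2 * w1 * w2 + 2 * u2 * w1 * w2 * w3 + u2 * u3 * z1 + u2 * u3 * w3 * z1 + u2 * u3 * w2 * z1 + u2 * u3 * w2 * w3 * z1 + 2 * u2 * u2 * z1 + 2 * u2 * u2 * w3 * z1 + 2 * u2 * u2 * w2 * z1 + 2 * u2 * u2 * w2 * w3 * z1 +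 7 * u1 + 20 * u1 * z1 + 9 * u1 * w3 + 22 * u1 * w3 * z1 + 7 * u1 * w2 + 20 * u1 * w2 * z1 + 9 * u1 * w2 * w3 + 22 * u1 * w2 * w3 * z1 + 7 * u1 * w1 + 9 * u1 * w1 * w3 + 7 * u1 * w1 * w2 + 9 * u1 * w1 * w2 * w3 + u1 * u3 + 2 * u1 * u3 * z1 + u1 * u3 * w3 + 2 * u1 * u3 * w3 * z1 + u1 * u3 * w2 + 2 * u1 * u3 * w2 * z1 + u1 * u3 * w2 * w3 + 2 * u1 * u3 * w2 * w3 * z1 + u1 * u3 * w1 + u1 * u3 * w1 * w3 + u1 * u3 * w1 * w2 + u1 * u3 * w1 * w2 * w3 + 2 * u1 * u2 + 6 * u1 * u2 * z1 + 2 * u1 * u2 * w3 + 6 * u1 * u2 * w3 * z1 + 2 * u1 * u2 * w2 + 6 * u1 * u2 * w2 * z1 + 2 * u1 * u2 * w2 * w3 + 6 * u1 * u2 * w2 * w3 * z1 + 2 * u1 * u2 * w1 + 2 * u1 * u2 * w1 * w3 + 2 * u1 * u2 * w1 * w2 + 2 * u1 * u2 * w1 * w2 * w3 + 2 * u1 * u1 + 4 * u1 * u1 * z1 + 2 * u1 * u1 * w3 + 4 * u1 * u1 * w3 * z1 + 2 * u1 * u1 * w2 + 4 * u1 * u1 * w2 * z1 + 2 * u1 * u1 * w2 * w3 + 4 * u1 * u1 * w2 * w3 * z1 + 2 * u1 * u1 * w1 + 2 * u1 * u1 * w1 * w3 + 2 * u1 * u1 * w1 * w2 + 2 * u1 *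 u1 * w1 * w2 * w3)).
rewrite !subn1 /=. ring.
Qed.

Lemma core_MOM (p1 p2 p3 r1 r2 r3 t1 t3 : nat) :
  2 <= p1 -> p1 < p2 -> 2 * p2 + 1 <= p3 -> 0 < r1 -> 0 < r2 -> 0 < r3 -> 0 < t1 -> t1 <= r1 -> 0 < t3 -> t3 <= r3 ->
  Tgt p1 p2 p3 r1 r2 r3 <= Vf (p1 * t1) 1 (p3 * t3) (p1 * r1-t1) (p2 * r2) (p3 * r3-t3) ((p1-1)*t1) 1 ((p3-1)*t3).
Proof.
move=> Hp1 Hp2 Hp3 Hr1 Hr2 Hr3 Ht1 Htr1 Ht3 Htr3; rewrite /Tgt /Vf !TB.
have [w1 ?] : exists w, t1 = w.+1 by (exists t1.-1; lia). subst t1.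
have [z1 ?] : exists z, r1 = w1.+1 + z by (exists (r1 - w1.+1); lia). subst r1.
rewrite MB; last lia.
have [w2 ?] : exists w, r2 = w.+1 by (exists r2.-1; lia). subst r2.
have [w3 ?] : exists w, t3 = w.+1 by (exists t3.-1; lia). subst t3.
have [z3 ?] : exists z, r3 = w3.+1 + z by (exists (r3 - w3.+1); lia). subst r3.
rewrite MB; last lia.
have [u1 ?] : exists u, p1 = u.+2 by (exists (p1 - 2); lia). subst p1.
have [u2 ?] : exists u, p2 = (u1+u).+3 by (exists (p2 - u1.+3); lia). subst p2.
have [u3 ?] : exists u, p3 = (2 * u1 + 2 * u2+u).+4.+3 by (exists (p3 - (2 * u1 + 2 * u2).+4.+3); lia). subst p3.
apply: (subleq (q := 8 + 7 * z3 + 18 * z1 + 28 * z1 * z3 + 12 * w3 + 22 * w3 * z1 + 7 * w2 * z3 + 18 * w2 * z1 + 28 * w2 * z1 * z3 + 4 * w2 * w3 + 22 * w2 * w3 * z1 + 8 * w1 + 7 * w1 * z3 + 12 * w1 * w3 + 7 * w1 * w2 * z3 + 4 * w1 * w2 * w3 + 2 * u3 + u3 * z3 + 4 * u3 * z1 + 4 * u3 * z1 * z3 + 2 * u3 * w3 + 4 * u3 * w3 * z1 + u3 * w2 + u3 * w2 * z3 + 4 * u3 * w2 * z1 + 4 * u3 * w2 * z1 * z3 + u3 * w2 * w3 + 4 * u3 * w2 * w3 * z1 + 2 * u3 * w1 + u3 * w1 * z3 + 2 * u3 * w1 * w3 + u3 * w1 * w2 + u3 * w1 * w2 * z3 + u3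 * w1 * w2 * w3 + 2 * u2 + 2 * u2 * z3 + 12 * u2 * z1 + 15 * u2 * z1 * z3 + 3 * u2 * w3 + 13 * u2 * w3 * z1 + 2 * u2 * w2 * z3 + 12 * u2 * w2 * z1 + 15 * u2 * w2 * z1 * z3 + u2 * w2 * w3 + 13 * u2 * w2 * w3 * z1 + 2 * u2 * w1 + 2 * u2 * w1 * z3 + 3 * u2 * w1 * w3 + 2 * u2 * w1 * w2 * z3 + u2 * w1 * w2 * w3 + u2 * u3 * z1 + u2 * u3 * z1 * z3 + u2 * u3 * w3 * z1 + u2 * u3 * w2 * z1 + u2 * u3 * w2 * z1 * z3 + u2 * u3 * w2 * w3 * z1 + 2 * u2 * u2 * z1 + 2 * u2 * u2 * z1 * z3 + 2 * u2 * u2 * w3 * z1 + 2 * u2 * u2 * w2 * z1 + 2 * u2 * u2 * w2 * z1 * z3 + 2 * u2 * u2 * w2 * w3 * z1 + 6 * u1 + 9 * u1 * z3 + 15 * u1 * z1 + 22 * u1 * z1 * z3 + 8 * u1 * w3 + 17 * u1 * w3 * z1 + 3 * u1 * w2 + 9 * u1 * w2 * z3 + 15 * u1 * w2 * z1 + 22 * u1 * w2 * z1 * z3 + 5 * u1 * w2 * w3 + 17 * u1 * w2 * w3 * z1 + 6 * u1 * w1 + 9 * u1 * w1 * z3 + 8 * u1 * w1 * w3 + 3 * u1 * w1 * w2 + 9 * u1 * w1 * w2 * z3 + 5 * u1 * w1 * w2 * w3 + u1 * u3 + u1 * u3 * z3 + 2 * u1 * u3 * z1 + 2 * u1 * u3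 * z1 * z3 + u1 * u3 * w3 + 2 * u1 * u3 * w3 * z1 + u1 * u3 * w2 + u1 * u3 * w2 * z3 + 2 * u1 * u3 * w2 * z1 + 2 * u1 * u3 * w2 * z1 * z3 + u1 * u3 * w2 * w3 + 2 * u1 * u3 * w2 * w3 * z1 + u1 * u3 * w1 + u1 * u3 * w1 * z3 + u1 * u3 * w1 * w3 + u1 * u3 * w1 * w2 + u1 * u3 * w1 * w2 * z3 + u1 * u3 * w1 * w2 * w3 + u1 * u2 + 2 * u1 * u2 * z3 + 5 * u1 * u2 * z1 + 6 * u1 * u2 * z1 * z3 + u1 * u2 * w3 + 5 * u1 * u2 * w3 * z1 + u1 * u2 * w2 + 2 * u1 * u2 * w2 * z3 + 5 * u1 * u2 * w2 * z1 + 6 * u1 * u2 * w2 * z1 * z3 + u1 * u2 * w2 * w3 + 5 * u1 * u2 * w2 * w3 * z1 + u1 * u2 * w1 + 2 * u1 * u2 * w1 * z3 + u1 * u2 * w1 * w3 + u1 * u2 * w1 * w2 + 2 * u1 * u2 * w1 * w2 * z3 + u1 * u2 * w1 * w2 * w3 + u1 * u1 + 2 * u1 * u1 * z3 + 3 * u1 * u1 * z1 + 4 * u1 * u1 * z1 * z3 + u1 * u1 * w3 + 3 * u1 * u1 * w3 * z1 + u1 * u1 * w2 + 2 * u1 * u1 * w2 * z3 + 3 * u1 * u1 * w2 * z1 + 4 * u1 * u1 * w2 * z1 * z3 + u1 * u1 * w2 * w3 + 3 * u1 * u1 * w2 * w3 * z1 + u1 * u1 * w1 + 2 * u1 * u1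 * w1 * z3 + u1 * u1 * w1 * w3 + u1 * u1 * w1 * w2 + 2 * u1 * u1 * w1 * w2 * z3 + u1 * u1 * w1 * w2 * w3)).
rewrite !subn1 /=. ring.
Qed.

Lemma core_MMO (p1 p2 p3 r1 r2 r3 t1 t2 : nat) :
  2 <= p1 -> p1 < p2 -> 2 * p2 + 1 <= p3 -> 0 < r1 -> 0 < r2 -> 0 < r3 -> 0 < t1 -> t1 <= r1 -> 0 < t2 -> t2 <= r2 ->
  Tgt p1 p2 p3 r1 r2 r3 <= Vf (p1 * t1) (p2 * t2) 1 (p1 * r1-t1) (p2 * r2-t2) (p3 * r3) ((p1-1)*t1) ((p2-1)*t2) 1.
Proof.
move=> Hp1 Hp2 Hp3 Hr1 Hr2 Hr3 Ht1 Htr1 Ht2 Htr2; rewrite /Tgt /Vf !TB.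
have [w1 ?] : exists w, t1 = w.+1 by (exists t1.-1; lia). subst t1.
have [z1 ?] : exists z, r1 = w1.+1 + z by (exists (r1 - w1.+1); lia). subst r1.
rewrite MB; last lia.
have [w2 ?] : exists w, t2 = w.+1 by (exists t2.-1; lia). subst t2.
have [z2 ?] : exists z, r2 = w2.+1 + z by (exists (r2 - w2.+1); lia). subst r2.
rewrite MB; last lia.
have [w3 ?] : exists w, r3 = w.+1 by (exists r3.-1; lia). subst r3.
have [u1 ?] : exists u, p1 = u.+2 by (exists (p1 - 2); lia). subst p1.
have [u2 ?] : exists u, p2 = (u1+u).+3 by (exists (p2 - u1.+3); lia). subst p2.
have [u3 ?] : exists u, p3 = (2 * u1 + 2 * u2+u).+4.+3 by (exists (p3 - (2 * u1 + 2 * u2).+4.+3); lia). subst p3.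
apply: (subleq (q := 3 * z2 + 10 * z1 + 24 * z1 * z2 + 7 * w3 * z2 + 14 * w3 * z1 + 28 * w3 * z1 * z2 + 10 * w2 * z1 + 14 * w2 * w3 * z1 + 3 * w1 * z2 + 7 * w1 * w3 * z2 + u3 * z2 + 2 * u3 * z1 + 4 * u3 * z1 * z2 + u3 * w3 * z2 + 2 * u3 * w3 * z1 + 4 * u3 * w3 * z1 * z2 + 2 * u3 * w2 * z1 + 2 * u3 * w2 * w3 * z1 + u3 * w1 * z2 + u3 * w1 * w3 * z2 + u2 * z2 + 10 * u2 * z1 + 14 * u2 * z1 * z2 + 2 * u2 * w3 * z2 + 11 * u2 * w3 * z1 + 15 * u2 * w3 * z1 * z2 + 10 * u2 * w2 * z1 + 11 * u2 * w2 * w3 * z1 + u2 * w1 * z2 + 2 * u2 * w1 * w3 * z2 + u2 * u3 * z1 + u2 * u3 * z1 * z2 + u2 * u3 * w3 * z1 + u2 * u3 * w3 * z1 * z2 + u2 * u3 * w2 * z1 + u2 * u3 * w2 * w3 * z1 + 2 * u2 * u2 * z1 + 2 * u2 * u2 * z1 * z2 + 2 * u2 * u2 * w3 * z1 + 2 * u2 * u2 * w3 * z1 * z2 + 2 * u2 * u2 * w2 * z1 + 2 * u2 * u2 * w2 * w3 * z1 + 7 * u1 * z2 + 9 * u1 * z1 + 20 * u1 * z1 * z2 + 9 * u1 * w3 * z2 + 11 * u1 * w3 * z1 + 22 * u1 * w3 * z1 * z2 + 9 * u1 * w2 * z1 + 11 * u1 * w2 * w3 * z1 + 7 * u1 * w1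 * z2 + 9 * u1 * w1 * w3 * z2 + u1 * u3 * z2 + u1 * u3 * z1 + 2 * u1 * u3 * z1 * z2 + u1 * u3 * w3 * z2 + u1 * u3 * w3 * z1 + 2 * u1 * u3 * w3 * z1 * z2 + u1 * u3 * w2 * z1 + u1 * u3 * w2 * w3 * z1 + u1 * u3 * w1 * z2 + u1 * u3 * w1 * w3 * z2 + 2 * u1 * u2 * z2 + 4 * u1 * u2 * z1 + 6 * u1 * u2 * z1 * z2 + 2 * u1 * u2 * w3 * z2 + 4 * u1 * u2 * w3 * z1 + 6 * u1 * u2 * w3 * z1 * z2 + 4 * u1 * u2 * w2 * z1 + 4 * u1 * u2 * w2 * w3 * z1 + 2 * u1 * u2 * w1 * z2 + 2 * u1 * u2 * w1 * w3 * z2 + 2 * u1 * u1 * z2 + 2 * u1 * u1 * z1 + 4 * u1 * u1 * z1 * z2 + 2 * u1 * u1 * w3 * z2 + 2 * u1 * u1 * w3 * z1 + 4 * u1 * u1 * w3 * z1 * z2 + 2 * u1 * u1 * w2 * z1 + 2 * u1 * u1 * w2 * w3 * z1 + 2 * u1 * u1 * w1 * z2 + 2 * u1 * u1 * w1 * w3 * z2)).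
rewrite !subn1 /=. ring.
Qed.

Lemma core_MMM (p1 p2 p3 r1 r2 r3 t1 t2 t3 : nat) :
  2 <= p1 -> p1 < p2 -> 2 * p2 + 1 <= p3 -> 0 < r1 -> 0 < r2 -> 0 < r3 -> 0 < t1 -> t1 <= r1 -> 0 < t2 -> t2 <= r2 -> 0 < t3 -> t3 <= r3 ->
  Tgt p1 p2 p3 r1 r2 r3 <= Vf (p1 * t1) (p2 * t2) (p3 * t3) (p1 * r1-t1) (p2 * r2-t2) (p3 * r3-t3) ((p1-1)*t1) ((p2-1)*t2) ((p3-1)*t3).
Proof.
move=> Hp1 Hp2 Hp3 Hr1 Hr2 Hr3 Ht1 Htr1 Ht2 Htr2 Ht3 Htr3; rewrite /Tgt /Vf !TB.
have [w1 ?] : exists w, t1 = w.+1 by (exists t1.-1; lia). subst t1.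
have [z1 ?] : exists z, r1 = w1.+1 + z by (exists (r1 - w1.+1); lia). subst r1.
rewrite MB; last lia.
have [w2 ?] : exists w, t2 = w.+1 by (exists t2.-1; lia). subst t2.
have [z2 ?] : exists z, r2 = w2.+1 + z by (exists (r2 - w2.+1); lia). subst r2.
rewrite MB; last lia.
have [w3 ?] : exists w, t3 = w.+1 by (exists t3.-1; lia). subst t3.
have [z3 ?] : exists z, r3 = w3.+1 + z by (exists (r3 - w3.+1); lia). subst r3.
rewrite MB; last lia.
have [u1 ?] : exists u, p1 = u.+2 by (exists (p1 - 2); lia). subst p1.
have [u2 ?] : exists u, p2 = (u1+u).+3 by (exists (p2 - u1.+3); lia). subst p2.
have [u3 ?] : exists u, p3 = (2 * u1 + 2 * u2+u).+4.+3 by (exists (p3 - (2 * u1 + 2 * u2).+4.+3); lia). subst p3.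
apply: (subleq (q := 24 + 7 * z2 * z3 + 6 * z1 + 14 * z1 * z3 + 18 * z1 * z2 + 28 * z1 * z2 * z3 + 28 * w3 + 4 * w3 * z2 + 10 * w3 * z1 + 22 * w3 * z1 * z2 + 24 * w2 + 6 * w2 * z1 + 14 * w2 * z1 * z3 + 28 * w2 * w3 + 10 * w2 * w3 * z1 + 24 * w1 + 7 * w1 * z2 * z3 + 28 * w1 * w3 + 4 * w1 * w3 * z2 + 24 * w1 * w2 + 28 * w1 * w2 * w3 + 4 * u3 + u3 * z2 + u3 * z2 * z3 + 2 * u3 * z1 + 2 * u3 * z1 * z3 + 4 * u3 * z1 * z2 + 4 * u3 * z1 * z2 * z3 + 4 * u3 * w3 + u3 * w3 * z2 + 2 * u3 * w3 * z1 + 4 * u3 * w3 * z1 * z2 + 4 * u3 * w2 + 2 * u3 * w2 * z1 + 2 * u3 * w2 * z1 * z3 + 4 * u3 * w2 * w3 + 2 * u3 * w2 * w3 * z1 + 4 * u3 * w1 + u3 * w1 * z2 + u3 * w1 * z2 * z3 + 4 * u3 * w1 * w3 + u3 * w1 * w3 * z2 + 4 * u3 * w1 * w2 + 4 * u3 * w1 * w2 * w3 + 14 * u2 + 2 * u2 * z2 * z3 + 8 * u2 * z1 + 11 * u2 * z1 * z3 + 12 * u2 * z1 * z2 + 15 * u2 * z1 * z2 * z3 + 15 * u2 * w3 + u2 * w3 * z2 + 9 * u2 * w3 * z1 + 13 * u2 * w3 * z1 * z2 + 14 * u2 * w2 + 8 * u2 * w2 * z1 + 11 * u2 * w2 * z1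 * z3 + 15 * u2 * w2 * w3 + 9 * u2 * w2 * w3 * z1 + 14 * u2 * w1 + 2 * u2 * w1 * z2 * z3 + 15 * u2 * w1 * w3 + u2 * w1 * w3 * z2 + 14 * u2 * w1 * w2 + 15 * u2 * w1 * w2 * w3 + u2 * u3 + u2 * u3 * z1 + u2 * u3 * z1 * z3 + u2 * u3 * z1 * z2 + u2 * u3 * z1 * z2 * z3 + u2 * u3 * w3 + u2 * u3 * w3 * z1 + u2 * u3 * w3 * z1 * z2 + u2 * u3 * w2 + u2 * u3 * w2 * z1 + u2 * u3 * w2 * z1 * z3 + u2 * u3 * w2 * w3 + u2 * u3 * w2 * w3 * z1 + u2 * u3 * w1 + u2 * u3 * w1 * w3 + u2 * u3 * w1 * w2 + u2 * u3 * w1 * w2 * w3 + 2 * u2 * u2 + 2 * u2 * u2 * z1 + 2 * u2 * u2 * z1 * z3 + 2 * u2 * u2 * z1 * z2 + 2 * u2 * u2 * z1 * z2 * z3 + 2 * u2 * u2 * w3 + 2 * u2 * u2 * w3 * z1 + 2 * u2 * u2 * w3 * z1 * z2 + 2 * u2 * u2 * w2 + 2 * u2 * u2 * w2 * z1 + 2 * u2 * u2 * w2 * z1 * z3 + 2 * u2 * u2 * w2 * w3 + 2 * u2 * u2 * w2 * w3 * z1 + 2 * u2 * u2 * w1 + 2 * u2 * u2 * w1 * w3 + 2 * u2 * u2 * w1 * w2 + 2 * u2 * u2 * w1 * w2 * w3 + 20 * u1 + 3 * u1 * z2 + 9 * u1 * z2 * z3 + 5 * u1 * z1 + 11 * u1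 * z1 * z3 + 15 * u1 * z1 * z2 + 22 * u1 * z1 * z2 * z3 + 22 * u1 * w3 + 5 * u1 * w3 * z2 + 7 * u1 * w3 * z1 + 17 * u1 * w3 * z1 * z2 + 20 * u1 * w2 + 5 * u1 * w2 * z1 + 11 * u1 * w2 * z1 * z3 + 22 * u1 * w2 * w3 + 7 * u1 * w2 * w3 * z1 + 20 * u1 * w1 + 3 * u1 * w1 * z2 + 9 * u1 * w1 * z2 * z3 + 22 * u1 * w1 * w3 + 5 * u1 * w1 * w3 * z2 + 20 * u1 * w1 * w2 + 22 * u1 * w1 * w2 * w3 + 2 * u1 * u3 + u1 * u3 * z2 + u1 * u3 * z2 * z3 + u1 * u3 * z1 + u1 * u3 * z1 * z3 + 2 * u1 * u3 * z1 * z2 + 2 * u1 * u3 * z1 * z2 * z3 + 2 * u1 * u3 * w3 + u1 * u3 * w3 * z2 + u1 * u3 * w3 * z1 + 2 * u1 * u3 * w3 * z1 * z2 + 2 * u1 * u3 * w2 + u1 * u3 * w2 * z1 + u1 * u3 * w2 * z1 * z3 + 2 * u1 * u3 * w2 * w3 + u1 * u3 * w2 * w3 * z1 + 2 * u1 * u3 * w1 + u1 * u3 * w1 * z2 + u1 * u3 * w1 * z2 * z3 + 2 * u1 * u3 * w1 * w3 + u1 * u3 * w1 * w3 * z2 + 2 * u1 * u3 * w1 * w2 + 2 * u1 * u3 * w1 * w2 * w3 + 6 * u1 * u2 + u1 * u2 * z2 + 2 * u1 * u2 * z2 * z3 + 3 * u1 * u2 * z1 + 4 * u1 * u2 * z1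 * z3 + 5 * u1 * u2 * z1 * z2 + 6 * u1 * u2 * z1 * z2 * z3 + 6 * u1 * u2 * w3 + u1 * u2 * w3 * z2 + 3 * u1 * u2 * w3 * z1 + 5 * u1 * u2 * w3 * z1 * z2 + 6 * u1 * u2 * w2 + 3 * u1 * u2 * w2 * z1 + 4 * u1 * u2 * w2 * z1 * z3 + 6 * u1 * u2 * w2 * w3 + 3 * u1 * u2 * w2 * w3 * z1 + 6 * u1 * u2 * w1 + u1 * u2 * w1 * z2 + 2 * u1 * u2 * w1 * z2 * z3 + 6 * u1 * u2 * w1 * w3 + u1 * u2 * w1 * w3 * z2 + 6 * u1 * u2 * w1 * w2 + 6 * u1 * u2 * w1 * w2 * w3 + 4 * u1 * u1 + u1 * u1 * z2 + 2 * u1 * u1 * z2 * z3 + u1 * u1 * z1 + 2 * u1 * u1 * z1 * z3 + 3 * u1 * u1 * z1 * z2 + 4 * u1 * u1 * z1 * z2 * z3 + 4 * u1 * u1 * w3 + u1 * u1 * w3 * z2 + u1 * u1 * w3 * z1 + 3 * u1 * u1 * w3 * z1 * z2 + 4 * u1 * u1 * w2 + u1 * u1 * w2 * z1 + 2 * u1 * u1 * w2 * z1 * z3 + 4 * u1 * u1 * w2 * w3 + u1 * u1 * w2 * w3 * z1 + 4 * u1 * u1 * w1 + u1 * u1 * w1 * z2 + 2 * u1 * u1 * w1 * z2 * z3 + 4 * u1 * u1 * w1 * w3 + u1 * u1 * w1 * w3 * z2 + 4 * u1 * u1 * w1 * w2 + 4 * u1 * u1 * w1 * w2 * w3)).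
rewrite !subn1 /=. ring.
Qed.

Definition valid (A B E p r : nat) :=
  (A = 1 /\ B = p * r /\ E = 1) \/
  exists t, [/\ 0 < t, t <= r, A = p * t, B = p * r - t & E = (p - 1) * t].

Lemma core (p1 p2 p3 r1 r2 r3 A1 B1 E1 A2 B2 E2 A3 B3 E3 : nat) :
  2 <= p1 -> p1 < p2 -> 2 * p2 + 1 <= p3 -> 0 < r1 -> 0 < r2 -> 0 < r3 ->
  valid A1 B1 E1 p1 r1 -> valid A2 B2 E2 p2 r2 -> valid A3 B3 E3 p3 r3 ->
  Tgt p1 p2 p3 r1 r2 r3 <= Vf A1 A2 A3 B1 B2 B3 E1 E2 E3.
Proof.
move=> H1 H2 H3 H4 H5 H6.
case=> [[-> [-> ->]]|[t1 [? ? -> -> ->]]];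
case=> [[-> [-> ->]]|[t2 [? ? -> -> ->]]];
case=> [[-> [-> ->]]|[t3 [? ? -> -> ->]]].
- exact: core_OOO.
- exact: core_OOM.
- exact: core_OMO.
- exact: core_OMM.
- exact: core_MOO.
- exact: core_MOM.
- exact: core_MMO.
- exact: core_MMM.
Qed.

Lemma expn_pred p a : 0 < a -> p ^ a = p * p ^ a.-1.
Proof. by move=> a0; rewrite -expnS prednK. Qed.

Lemma comp_valid p a c : prime p -> 0 < a -> c <= a ->
  valid (cA (p ^ a) (p ^ c)) (cB (p ^ a) (p ^ c)) (cE (p ^ a) (p ^ c)) p (p ^ a.-1).
Proof.
move=> pp a0 ca; have p0 := prime_gt0 pp.
have [eA eB eE] := comp_vals pp ca.
move: eB eE; case: ifP => [/eqP ec|/negbT ne] -> ->.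
  left; rewrite eA ec subnn expn0 -expn_pred //.
right; have ca' : c < a by rewrite ltn_neqAle ne ca.
exists (p ^ (a - c.+1)); split.
- by rewrite expn_gt0 p0.
- by rewrite leq_pexp2l //; lia.
- by rewrite eA -expnS; congr (p ^ _); lia.
- by rewrite -expn_pred.
- by rewrite mulnBl mul1n -expnS; congr (p ^ _ - _); lia.
Qed.

Lemma pfactor_gcd p a x : prime p -> exists2 c, c <= a & gcdn (p ^ a) x = p ^ c.
Proof. by move=> pp; apply/(dvdn_pfactor _ _ pp); exact: dvdn_gcdl. Qed.

Lemma bigmin_eq (T : finType) (F : T -> nat) m x0 :
  F x0 <= m -> (forall x, F x0 <= F x) -> \big[minn/m]_(x : T) F x = F x0.
Proof.
move=> hm hx; apply/eqP; rewrite eqn_leq; apply/andP; split.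
  have : x0 \in index_enum T := mem_index_enum x0.
  elim: (index_enum T) => // y s IH; rewrite inE big_cons => /orP [/eqP <-|/IH h].
    exact: geq_minl.
  exact: leq_trans (geq_minr _ _) h.
by elim/big_ind: _ => // u v hu hv; rewrite leq_min hu hv.
Qed.

Theorem corollary5p3 (p1 p2 p3 a1 a2 a3 n : nat) :
  prime p1 -> prime p2 -> prime p3 -> p1 < p2 -> p2 < p3 ->
  0 < a1 -> 0 < a2 -> 0 < a3 ->
  n = p1 ^ a1 * p2 ^ a2 * p3 ^ a3 ->
  2 * p2 + 1 <= p3 ->
  pg_mindeg 'Z_n = pg_deg (inZp (p3 ^ a3) : 'Z_n).
Proof.
move=> pp1 pp2 pp3 l12 l23 a10 a20 a30 En Hp3.
have p10 := prime_gt0 pp1; have p20 := prime_gt0 pp2; have p30 := prime_gt0 pp3.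
have q1 := prime_gt1 pp1.
have h1 : 0 < p1 ^ a1 by rewrite expn_gt0 p10.
have h2 : 0 < p2 ^ a2 by rewrite expn_gt0 p20.
have h3 : 0 < p3 ^ a3 by rewrite expn_gt0 p30.
have cop : forall p q a b, prime p -> prime q -> p != q -> coprime (p ^ a) (q ^ b).
  move=> p q a b pp pq ne; rewrite coprimeXl // coprimeXr //.
  by rewrite prime_coprime // dvdn_prime2 //.
have c12 : coprime (p1 ^ a1) (p2 ^ a2) by apply: cop => //; rewrite neq_ltn l12.
have c13 : coprime (p1 ^ a1) (p3 ^ a3) by apply: cop => //; rewrite neq_ltn (ltn_trans l12 l23).
have c23 : coprime (p2 ^ a2) (p3 ^ a3) by apply: cop => //; rewrite neq_ltn l23.
have P3lt : p3 ^ a3 < n.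
  have e1 : p1 <= p1 ^ a1 by rewrite -{1}(expn1 p1) leq_pexp2l.
  rewrite En ltn_Pmull //; apply: (leq_trans q1); apply: (leq_trans e1).
  exact: leq_pmulr h2.
have n1 : 1 < n by apply: leq_ltn_trans P3lt.
have EN : (Zp_trunc n).+2 = p1 ^ a1 * p2 ^ a2 * p3 ^ a3 by rewrite Zp_cast.
set x0 := (inZp (p3 ^ a3) : 'Z_n).
have vx0 : nat_of_ord x0 = p3 ^ a3 by rewrite /= Zp_cast // modn_small.
have deg0 : pg_deg x0 = Tgt p1 p2 p3 (p1 ^ a1.-1) (p2 ^ a2.-1) (p3 ^ a3.-1) - 1.
  rewrite (deg_formula x0 EN) // vx0.
  rewrite (gcdn_idPl (dvdnn _)).
  rewrite (eqP c13) (eqP c23).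
  have [A1 B1 E1] := @comp_vals p1 a1 0 pp1 (leq0n a1).
  have [A2 B2 E2] := @comp_vals p2 a2 0 pp2 (leq0n a2).
  rewrite expn0 in A1 B1 E1 A2 B2 E2.
  have [A3 B3 E3] := @comp_vals p3 a3 a3 pp3 (leqnn a3).
  rewrite A1 B1 E1 A2 B2 E2 A3 B3 E3 !eqxx.
  rewrite eq_sym (negbTE (lt0n_neq0 a10)) eq_sym (negbTE (lt0n_neq0 a20)).
  rewrite !subn0 !subn1 subnn expn0 /Tgt /Vf !TB.
  rewrite -(expn_pred p1 a10) -(expn_pred p2 a20) -(expn_pred p3 a30).
  by rewrite -!TB -(expn_pred p1 a10) -(expn_pred p2 a20).
apply: bigmin_eq.
  by rewrite /pg_deg max_card.
move=> x; rewrite deg0 (deg_formula x EN) //.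
have [c1 ca1 ->] := @pfactor_gcd p1 a1 x pp1.
have [c2 ca2 ->] := @pfactor_gcd p2 a2 x pp2.
have [c3 ca3 ->] := @pfactor_gcd p3 a3 x pp3.
apply: leq_sub2r; rewrite -/(Vf _ _ _ _ _ _ _ _ _).
apply: core => //; try (by rewrite expn_gt0 ?p10 ?p20 ?p30); try exact: comp_valid.
Qed.
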